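(* Let $p\in\{3,4,\dots\}$, $a\ge0$, $b>0$ satisfy either ($a>0$ and $b\in[p/2-1,p/2]$) or ($a=0$ and $b\in[p/2-1,p/2)$). Let $y>0$, $N\sim\mathrm{Poisson}(y/2)$ (expectations $E[\cdot\mid y]$ are with respect to this law), and $k\in\{1,2,3\}$. (1) If $a=0$, then $$\frac{E[w_k(N)\mid y]}{E[w_{k-1}(N)\mid y]}=\frac p2+k-b-1+\frac y2+\frac{y(k-b-1)}{2}\frac{E[w_{k-1}(N)/(N+p/2)\mid y]}{E[w_{k-1}(N)\mid y]}.$$ (2) If $a>0$, then $$\frac{E[w_k(N)\mid y]}{E[w_{k-1}(N)\mid y]}=\frac p2+k-b-1+\frac y2+\frac{y(k-b-1)}{2}\frac{E[w_{k-1}(N)/(N+p/2)\mid y]}{E[w_{k-1}(N)\mid y]}+\frac y2\frac{E[\phi(N+k-1)w_{k-1}(N)/(N+p/2)\mid y]}{E[w_{k-1}(N)\mid y]}+\frac{E[\phi(N+k-1)w_{k-1}(N)\mid y]}{E[w_{k-1}(N)\mid y]}.$$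
   Context: $g_0(z)=(a+z)^{-b}$; for $n\in\mathbb{Z}^+=\{0,1,2,\dots\}$ and $k\in\{0,1,2,3\}$, $w_k(n)=\int_0^\infty\frac{g_0(z)(z/2)^{n+p/2+k-1}e^{-z/2}}{2\Gamma(n+p/2)}dz$. For $a>0$, $\phi:\mathbb{Z}^+\to(0,\infty)$ is $\phi(n)=\frac{\int_0^\infty\frac{ab}{a+z}g_0(z)(z/2)^{n+p/2-1}e^{-z/2}dz}{\int_0^\infty g_0(z)(z/2)^{n+p/2-1}e^{-z/2}dz}$. *)

(* Defs.v *)
From Stdlib Require Import Reals Factorial.
From Coquelicot Require Import Coquelicot.
Open Scope R_scope.

Definition int0inf (f : R -> R) : R :=
  RInt_gen f (at_right 0) (Rbar_locally p_infty).

Definition Gamma (s : R) : R :=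
  int0inf (fun t => Rpower t (s - 1) * exp (- t)).

Definition g0 (a b z : R) : R := Rpower (a + z) (- b).

Definition w (a b : R) (p k n : nat) : R :=
  int0inf (fun z => g0 a b z * Rpower (z / 2) (INR n + INR p / 2 + INR k - 1)
                    * exp (- z / 2) / (2 * Gamma (INR n + INR p / 2))).

Definition phi (a b : R) (p n : nat) : R :=
  int0inf (fun z => a * b / (a + z) * g0 a b z
                    * Rpower (z / 2) (INR n + INR p / 2 - 1) * exp (- z / 2))
  / int0inf (fun z => g0 a b z * Rpower (z / 2) (INR n + INR p / 2 - 1) * exp (- z / 2)).

Definition EPois (y : R) (f : nat -> R) : R :=
  Series (fun n => exp (- (y / 2)) * (y / 2) ^ n / INR (fact n) * f n).

(* Main.v *)
Require Import Defs.
From Stdlib Require Import Reals Lra Lia Psatz Factorial.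
From Coquelicot Require Import Coquelicot.
Open Scope R_scope.

Lemma exp_le_mono x y : x <= y -> exp x <= exp y.
Proof. intros [H|H]; [left; apply exp_increasing; auto | subst; lra]. Qed.

Lemma ln_le_sub1 u : 0 < u -> ln u <= u - 1.
Proof. intros Hu. generalize (exp_ineq1_le (ln u)). rewrite exp_ln by lra. lra. Qed.

Lemma pow_bound c : 0 <= c -> exists K, 0 < K /\ forall u, 0 < u -> Rpower u c <= K * exp (u/2).
Proof.
  intros Hc. destruct (Req_dec c 0) as [->|Hc0].
  - exists 1. split; [lra|]. intros u Hu. rewrite Rpower_O by lra.
    generalize (exp_ineq1_le (u/2)). lra.
  - assert (Hcp: 0 < c) by lra.
    exists (exp (c * (ln (2*c) - 1))). split; [apply exp_pos|].
    intros u Hu. unfold Rpower. rewrite <- exp_plus. apply exp_le_mono.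
    assert (H1 := ln_le_sub1 (u/(2*c)) ltac:(unfold Rdiv; apply Rmult_lt_0_compat; [lra| apply Rinv_0_lt_compat; lra])).
    rewrite ln_div in H1; [|lra|lra].
    assert (H2: c * (ln u - ln (2*c)) <= c * (u/(2*c) - 1)).
    { apply Rmult_le_compat_l; lra. }
    replace (c * (u/(2*c) - 1)) with (u/2 - c) in H2 by (field; lra).
    nra.
Qed.

Lemma Rpower_small r : 0 < r -> forall eps, 0 < eps -> exists d, 0 < d /\
  forall z, 0 < z < d -> Rpower z r < eps.
Proof.
  intros Hr eps He. exists (exp (ln eps / r)). split; [apply exp_pos|].
  intros z [Hz Hzd]. unfold Rpower.
  rewrite <- (exp_ln eps) by lra. apply exp_increasing.
  apply ln_increasing in Hzd; auto. rewrite ln_exp in Hzd.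
  apply (Rmult_lt_compat_l r) in Hzd; auto.
  replace (r * (ln eps / r)) with (ln eps) in Hzd by (field; lra). lra.
Qed.

Lemma Rpower_1_base y : Rpower 1 y = 1.
Proof. unfold Rpower. rewrite ln_1, Rmult_0_r. apply exp_0. Qed.

Lemma Rpower_pos x y : 0 < Rpower x y.
Proof. apply exp_pos. Qed.

Lemma is_derive_Rpower c x : 0 < x -> is_derive (fun z => Rpower z c) x (c * Rpower x (c - 1)).
Proof. intros Hx. apply is_derive_Reals. apply derivable_pt_lim_power. auto. Qed.

Lemma RInt_by_deriv (F g : R -> R) x y :
  (forall z, Rmin x y <= z <= Rmax x y -> is_derive F z (g z)) ->
  (forall z, Rmin x y <= z <= Rmax x y -> continuous g z) ->
  RInt g x y = F y - F x.
Proof.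
  intros H1 H2. assert (H := @is_RInt_derive R_CompleteNormedModule F g x y H1 H2).
  apply is_RInt_unique in H. rewrite H. reflexivity.
Qed.

Lemma ex_RInt_pos (f : R -> R) x y : (forall z, 0 < z -> continuous f z) -> 0 < x -> 0 < y -> ex_RInt f x y.
Proof. intros Hc Hx Hy. apply (@ex_RInt_continuous R_CompleteNormedModule). intros z Hz. apply Hc.
  assert (0 < Rmin x y) by (apply Rmin_glb_lt; lra). lra. Qed.

Lemma RInt_mono (f : R -> R) x' x y y' : (forall z, 0<z -> continuous f z) -> (forall z, 0<z -> 0 <= f z) ->
  0 < x' -> x' <= x -> x <= y -> y <= y' -> RInt f x y <= RInt f x' y'.
Proof.
  intros Hc Hp H1 H2 H3 H4.
  rewrite <- (RInt_Chasles f x' x y') by (apply ex_RInt_pos; auto; lra).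
  rewrite <- (RInt_Chasles f x y y') by (apply ex_RInt_pos; auto; lra).
  assert (0 <= RInt f x' x) by (apply RInt_ge_0; [lra| apply ex_RInt_pos; auto; lra| intros; apply Hp; lra]).
  assert (0 <= RInt f y y') by (apply RInt_ge_0; [lra| apply ex_RInt_pos; auto; lra| intros; apply Hp; lra]).
  change plus with Rplus. simpl. lra.
Qed.

Lemma cont_of_der (f : R -> R) x : ex_derive f x -> continuous f x.
Proof. apply (@ex_derive_continuous R_AbsRing R_NormedModule). Qed.
From Stdlib Require Import Classical.
Lemma int_pow_bound A r x : -1 < r -> 0 <= A -> 0 < x <= 1 ->
  RInt (fun z => A * Rpower z r) x 1 <= A / (r+1).
Proof.
  intros Hr HA Hx.
  rewrite (RInt_by_deriv (fun z => A * Rpower z (r+1) / (r+1))).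
  - rewrite Rpower_1_base. assert (0 < Rpower x (r+1)) by apply Rpower_pos.
    unfold Rdiv. assert (0 < /(r+1)) by (apply Rinv_0_lt_compat; lra).
    assert (0 <= A * Rpower x (r+1) * /(r+1)) by (apply Rmult_le_pos; [apply Rmult_le_pos|]; lra). lra.
  - intros z Hz. rewrite Rmin_left, Rmax_right in Hz by lra.
    unfold Rpower. auto_derive; [lra|].
    replace (exp ((r+1) * ln z)) with (exp (r * ln z) * z)
      by (rewrite Rmult_plus_distr_r, exp_plus, Rmult_1_l, exp_ln; lra).
    field. lra.
  - intros z Hz. rewrite Rmin_left, Rmax_right in Hz by lra.
    apply cont_of_der. unfold Rpower. auto_derive. lra.
Qed.

Lemma int_exp_bound B y : 0 <= B -> 1 <= y ->
  RInt (fun z => B * exp (- z / 4)) 1 y <= 4 * B.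
Proof.
  intros HB Hy.
  rewrite (RInt_by_deriv (fun z => - 4 * B * exp (- z / 4))).
  - assert (0 < exp (- y / 4)) by apply exp_pos.
    assert (exp (- (1) / 4) <= 1) by (apply Rle_trans with (exp 0); [apply exp_le_mono; lra | rewrite exp_0; lra]).
    assert (0 <= B * exp (- y / 4)) by (apply Rmult_le_pos; lra).
    assert (B * exp (- (1) / 4) <= B * 1) by (apply Rmult_le_compat_l; lra).
    lra.
  - intros z Hz. auto_derive; [auto|]. unfold Rdiv. field.
  - intros z Hz. apply cont_of_der. auto_derive. auto.
Qed.

Lemma ex_int (f : R -> R) A r B : -1 < r -> 0 <= A -> 0 <= B ->
  (forall z, 0 < z -> continuous f z) -> (forall z, 0 < z -> 0 <= f z) ->
  (forall z, 0 < z <= 1 -> f z <= A * Rpower z r) ->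
  (forall z, 1 <= z -> f z <= B * exp (- z / 4)) ->
  exists L, is_RInt_gen f (at_right 0) (Rbar_locally p_infty) L /\
    forall x y, 0 < x -> x <= y -> RInt f x y <= L.
Proof.
  intros Hr HA HB Hc Hp H0 Hinf.
  set (E := fun v => exists x y, 0 < x /\ x <= y /\ v = RInt f x y).
  assert (Hbd: forall x y, 0 < x -> x <= y -> RInt f x y <= A/(r+1) + 4*B).
  { intros x y Hx Hxy.
    set (x1 := Rmin x 1). set (y1 := Rmax y 1).
    assert (Hx1: 0 < x1 <= 1) by (unfold x1; split; [apply Rmin_glb_lt; lra | apply Rmin_r]).
    assert (Hy1: 1 <= y1) by (unfold y1; apply Rmax_r).
    apply Rle_trans with (RInt f x1 y1).
    { apply RInt_mono; auto; try lra; unfold x1, y1; try apply Rmin_l; try apply Rmax_l. }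
    rewrite <- (RInt_Chasles f x1 1 y1) by (apply ex_RInt_pos; auto; lra).
    change plus with Rplus; simpl.
    assert (RInt f x1 1 <= RInt (fun z => A * Rpower z r) x1 1).
    { apply RInt_le; [lra | apply ex_RInt_pos; auto; lra | | intros z Hz; apply H0; lra].
      apply (@ex_RInt_continuous R_CompleteNormedModule); intros z Hz.
      rewrite Rmin_left, Rmax_right in Hz by lra.
      apply cont_of_der; unfold Rpower; auto_derive; lra. }
    assert (RInt f 1 y1 <= RInt (fun z => B * exp (- z / 4)) 1 y1).
    { apply RInt_le; [lra | apply ex_RInt_pos; auto; lra | | intros z Hz; apply Hinf; lra].
      apply (@ex_RInt_continuous R_CompleteNormedModule); intros z Hz.
      apply cont_of_der; auto_derive; auto. }
    pose proof (int_pow_bound A r x1 Hr HA Hx1).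
    pose proof (int_exp_bound B y1 HB Hy1). lra. }
  assert (Hex: exists v, E v) by (exists (RInt f 1 1); exists 1, 1; repeat split; lra).
  assert (Hb: bound E) by (exists (A/(r+1)+4*B); intros v [x [y [Hx [Hxy ->]]]]; apply Hbd; auto).
  destruct (completeness E Hb Hex) as [L [HLub HLleast]].
  assert (Hup: forall x y, 0 < x -> x <= y -> RInt f x y <= L)
    by (intros x y Hx Hxy; apply HLub; exists x, y; auto).
  exists L. split; auto.
  unfold is_RInt_gen, filterlimi, filter_le, filtermapi. intros P [eps HP].
    assert (Hv: exists x0 y0, 0 < x0 /\ x0 <= y0 /\ L - eps < RInt f x0 y0).
    { apply NNPP. intros Hn.
      assert (L <= L - eps).
      { apply HLleast. intros v [x [y [Hx [Hxy ->]]]].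
        apply Rnot_lt_le. intros Hl. apply Hn. exists x, y. auto. }
      destruct eps; simpl in *; lra. }
    destruct Hv as [x0 [y0 [Hx0 [Hxy0 Hv]]]].
    apply (Filter_prod _ _ _ (fun x => 0 < x <= x0) (fun y => y0 <= y)).
    + exists (mkposreal x0 Hx0). intros x Hx Hx'. split; auto.
      change (Rabs (x - 0) < x0) in Hx. rewrite Rminus_0_r in Hx. apply Rabs_def2 in Hx. lra.
    + exists y0. intros; lra.
    + intros x y [Hx Hx'] Hy. simpl. exists (RInt f x y). split.
      { apply (@RInt_correct R_CompleteNormedModule). apply ex_RInt_pos; auto; lra. }
      apply HP. change (Rabs (RInt f x y - L) < eps).
      assert (RInt f x0 y0 <= RInt f x y) by (apply RInt_mono; auto; lra).
      assert (RInt f x y <= L) by (apply Hup; lra).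
      apply Rabs_def1; lra.
Qed.

Lemma ibp0 (U u : R -> R) :
  (forall z, 0 < z -> is_derive U z (u z)) -> (forall z, 0 < z -> continuous u z) ->
  (forall e, 0 < e -> exists d, 0 < d /\ forall z, 0 < z < d -> Rabs (U z) < e) ->
  (forall e, 0 < e -> exists M, forall z, M < z -> Rabs (U z) < e) ->
  is_RInt_gen u (at_right 0) (Rbar_locally p_infty) 0.
Proof.
  intros Hd Hc H0 Hinf.
  unfold is_RInt_gen, filterlimi, filter_le, filtermapi. intros P [eps HP].
  assert (He2 : 0 < eps / 2) by (destruct eps; simpl; lra).
  destruct (H0 _ He2) as [d [Hdp Hd']]. destruct (Hinf _ He2) as [M HM].
  apply (Filter_prod _ _ _ (fun x => 0 < x < d) (fun y => Rmax M 0 < y)).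
  - exists (mkposreal d Hdp). intros x Hx Hx'. split; auto.
    change (Rabs (x - 0) < d) in Hx. rewrite Rminus_0_r in Hx. apply Rabs_def2 in Hx. lra.
  - exists (Rmax M 0). auto.
  - intros x y [Hx Hx'] Hy. simpl.
    assert (HM0 := Rmax_l M 0). assert (HM1 := Rmax_r M 0).
    exists (U y - U x). split.
    + apply (@is_RInt_derive R_CompleteNormedModule).
      * intros z Hz. apply Hd.
        assert (0 < Rmin x y) by (apply Rmin_glb_lt; lra). lra.
      * intros z Hz. apply Hc.
        assert (0 < Rmin x y) by (apply Rmin_glb_lt; lra). lra.
    + apply HP. change (Rabs (U y - U x - 0) < eps).
      assert (A1 := HM y ltac:(lra)). assert (A2 := Hd' x ltac:(lra)).
      apply Rabs_def2 in A1. apply Rabs_def2 in A2. apply Rabs_def1; lra.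
Qed.

Definition fI a b s z := g0 a b z * Rpower (z/2) s * exp (- z / 2).
Definition gI a b s z := a * b / (a + z) * g0 a b z * Rpower (z/2) s * exp (- z / 2).
Definition Fint a b s := int0inf (fI a b s).
Definition Gint a b s := int0inf (gI a b s).

Lemma exp_sm1 s w : 0 < w -> exp ((s-1) * ln w) = exp (s * ln w) * / w.
Proof.
  intros Hw. replace ((s-1)*ln w) with (s * ln w + - (ln w)) by ring.
  rewrite exp_plus, exp_Ropp, exp_ln; auto.
Qed.

Lemma exp_small B : 0 < B -> forall e, 0 < e -> exists M, forall z, M < z -> B * exp (- z / 4) < e.
Proof.
  intros HB e He. exists (- 4 * ln (e / B)). intros z Hz.
  assert (exp (- z / 4) < e / B).
  { rewrite <- (exp_ln (e / B)) by (unfold Rdiv; apply Rmult_lt_0_compat; [lra| apply Rinv_0_lt_compat; lra]).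
    apply exp_increasing. lra. }
  apply (Rmult_lt_compat_l B) in H; auto.
  replace (B * (e / B)) with e in H by (field; lra). lra.
Qed.

Lemma fI_cont a b s z : 0 <= a -> 0 < z -> continuous (fI a b s) z.
Proof. intros. apply cont_of_der. unfold fI, g0, Rpower. auto_derive. repeat split; lra. Qed.

Lemma gI_cont a b s z : 0 <= a -> 0 < z -> continuous (gI a b s) z.
Proof. intros. apply cont_of_der. unfold gI, g0, Rpower. auto_derive. repeat split; lra. Qed.

Lemma fI_pos a b s z : 0 <= a -> 0 < z -> 0 < fI a b s z.
Proof. intros. unfold fI, g0. repeat apply Rmult_lt_0_compat; try apply Rpower_pos; apply exp_pos. Qed.

Lemma gI_eq a b s z : gI a b s z = a * b / (a + z) * fI a b s z.
Proof. unfold gI, fI. ring. Qed.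

Lemma gI_bound a b s z : 0 <= a -> 0 < b -> 0 < z -> 0 <= gI a b s z <= b * fI a b s z.
Proof.
  intros Ha Hb Hz. rewrite gI_eq. assert (Hf := fI_pos a b s z Ha Hz).
  assert (0 <= a * b / (a + z) <= b).
  { split. unfold Rdiv. apply Rmult_le_pos; [nra| left; apply Rinv_0_lt_compat; lra].
    apply Rmult_le_reg_r with (a + z); [lra|]. unfold Rdiv. rewrite Rmult_assoc, Rinv_l by lra. nra. }
  split; [apply Rmult_le_pos; lra | apply Rmult_le_compat_r; lra].
Qed.

Lemma Rpower_le_base x y c : 0 <= c -> 0 < x <= y -> Rpower x c <= Rpower y c.
Proof. intros. apply Rle_Rpower_l; auto. Qed.

Lemma fI_small a b s : 0 <= a -> 0 < b -> 0 <= s ->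
  exists A, 0 < A /\ (forall z, 0 < z -> fI a b s z <= A * Rpower z (if Req_EM_T a 0 then s - b else s)).
Proof.
  intros Ha Hb Hs. destruct (Req_EM_T a 0) as [->|Ha0].
  - exists 1. split; [lra|]. intros z Hz. unfold fI, g0. rewrite Rplus_0_l.
    assert (Rpower (z/2) s <= Rpower z s) by (apply Rpower_le_base; lra).
    assert (exp (- z / 2) <= 1) by (apply Rle_trans with (exp 0); [apply exp_le_mono; lra| rewrite exp_0; lra]).
    assert (HP1 := Rpower_pos z (-b)). assert (HP2 := Rpower_pos (z/2) s). assert (HP3 := exp_pos (-z/2)).
    replace (1 * Rpower z (s - b)) with (Rpower z (-b) * Rpower z s * 1)
      by (unfold Rminus; rewrite Rplus_comm, Rpower_plus; ring).
    apply Rmult_le_compat; try lra.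
    + apply Rmult_le_pos; lra.
    + apply Rmult_le_compat_l; lra.
  - assert (Hap : 0 < a) by lra.
    exists (Rpower a (-b)). split; [apply Rpower_pos|]. intros z Hz. unfold fI, g0.
    assert (Rpower (z/2) s <= Rpower z s) by (apply Rpower_le_base; lra).
    assert (exp (- z / 2) <= 1) by (apply Rle_trans with (exp 0); [apply exp_le_mono; lra| rewrite exp_0; lra]).
    assert (Rpower (a + z) (-b) <= Rpower a (-b)).
    { rewrite !Rpower_Ropp. apply Rinv_le_contravar; [apply Rpower_pos|]. apply Rpower_le_base; lra. }
    assert (HP1 := Rpower_pos (a+z) (-b)). assert (HP2 := Rpower_pos (z/2) s). assert (HP3 := exp_pos (-z/2)).
    rewrite <- (Rmult_1_r (Rpower a (-b) * Rpower z s)).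
    apply Rmult_le_compat; try lra.
    + apply Rmult_le_pos; lra.
    + apply Rmult_le_compat; lra.
Qed.

Lemma fI_large a b s : 0 <= a -> 0 < b -> 0 <= s ->
  exists B, 0 < B /\ (forall z, 1 <= z -> fI a b s z <= B * exp (- z / 4)).
Proof.
  intros Ha Hb Hs. destruct (pow_bound s Hs) as [K [HK HKb]].
  exists K. split; auto. intros z Hz. unfold fI, g0.
  assert (Rpower (a + z) (-b) <= 1).
  { rewrite Rpower_Ropp. rewrite <- Rinv_1. apply Rinv_le_contravar; [lra|].
    rewrite <- (Rpower_1_base b). apply Rpower_le_base; lra. }
  assert (H2 := HKb (z/2) ltac:(lra)).
  assert (HP1 := Rpower_pos (a+z) (-b)). assert (HP2 := Rpower_pos (z/2) s). assert (HP3 := exp_pos (-z/2)).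
  apply Rle_trans with (1 * (K * exp (z/2/2)) * exp (- z / 2)).
  - apply Rmult_le_compat_r; [lra|]. apply Rmult_le_compat; lra.
  - rewrite Rmult_1_l, Rmult_assoc, <- exp_plus. right. f_equal. f_equal. field.
Qed.

Lemma ex_F a b s : 0 <= a -> 0 < b -> 0 <= s -> (0 < a \/ -1 < s - b) ->
  is_RInt_gen (fI a b s) (at_right 0) (Rbar_locally p_infty) (Fint a b s) /\ 0 < Fint a b s.
Proof.
  intros Ha Hb Hs Hc.
  destruct (fI_small a b s Ha Hb Hs) as [A [HA HAb]].
  destruct (fI_large a b s Ha Hb Hs) as [B [HB HBb]].
  destruct (ex_int (fI a b s) A (if Req_EM_T a 0 then s - b else s) B) as [L [HL HLup]].
  - destruct (Req_EM_T a 0); [destruct Hc; lra | lra].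
  - lra.
  - lra.
  - intros; apply fI_cont; auto.
  - intros; left; apply fI_pos; auto.
  - intros z Hz; apply HAb; lra.
  - auto.
  - assert (Fint a b s = L) by (apply is_RInt_gen_unique; auto).
    rewrite H. split; auto.
    apply Rlt_le_trans with (RInt (fI a b s) 1 2); [|apply HLup; lra].
    apply RInt_gt_0; [lra| intros; apply fI_pos; lra | intros; apply fI_cont; lra].
Qed.

Lemma ex_G a b s : 0 <= a -> 0 < b -> 0 <= s -> (0 < a \/ -1 < s - b) ->
  is_RInt_gen (gI a b s) (at_right 0) (Rbar_locally p_infty) (Gint a b s) /\
  0 <= Gint a b s <= b * Fint a b s.
Proof.
  intros Ha Hb Hs Hc.
  destruct (ex_F a b s Ha Hb Hs Hc) as [HF HFp].
  destruct (fI_small a b s Ha Hb Hs) as [A [HA HAb]].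
  destruct (fI_large a b s Ha Hb Hs) as [B [HB HBb]].
  destruct (ex_int (gI a b s) (b * A) (if Req_EM_T a 0 then s - b else s) (b * B)) as [L [HL HLup]].
  - destruct (Req_EM_T a 0); [destruct Hc; lra | lra].
  - nra.
  - nra.
  - intros; apply gI_cont; auto.
  - intros; apply gI_bound; auto.
  - intros z Hz. apply Rle_trans with (b * fI a b s z); [apply gI_bound; lra|].
    rewrite Rmult_assoc. apply Rmult_le_compat_l; [lra|]. apply HAb; lra.
  - intros z Hz. apply Rle_trans with (b * fI a b s z); [apply gI_bound; lra|].
    rewrite Rmult_assoc. apply Rmult_le_compat_l; [lra|]. apply HBb; lra.
  - assert (Gint a b s = L) by (apply is_RInt_gen_unique; auto).
    split; [rewrite H; auto|]. split.
    + rewrite H. apply Rle_trans with (RInt (gI a b s) 1 2); [|apply HLup; lra].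
      apply RInt_ge_0; [lra| apply ex_RInt_pos; [intros; apply gI_cont; lra|lra|lra] | intros; apply gI_bound; lra].
    + assert (HbF : is_RInt_gen (fun z => b * fI a b s z) (at_right 0) (Rbar_locally p_infty) (b * Fint a b s)).
      { exact (is_RInt_gen_scal (fI a b s) b (Fint a b s) HF). }
      assert (Hn := @RInt_gen_norm R_CompleteNormedModule (at_right 0) (Rbar_locally p_infty) _ _ (gI a b s) (fun z => b * fI a b s z) L (b * Fint a b s)).
      assert (Rabs L <= b * Fint a b s).
      { apply Hn; auto.
        - apply (Filter_prod _ _ _ (fun x => x < 1) (fun y => 1 < y)).
          + exists (mkposreal 1 Rlt_0_1). intros x Hx _. change (Rabs (x - 0) < 1) in Hx.
            apply Rabs_def2 in Hx. lra.
          + exists 1. auto.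
          + intros; simpl; lra.
        - apply (Filter_prod _ _ _ (fun x => 0 < x) (fun y => 1 < y)).
          + exists (mkposreal 1 Rlt_0_1). intros x Hx Hx'. auto.
          + exists 1. auto.
          + intros x y Hx Hy z Hz. simpl in Hz. change (Rabs (gI a b s z) <= b * fI a b s z).
            destruct (gI_bound a b s z Ha Hb ltac:(lra)). rewrite Rabs_pos_eq; lra. }
      rewrite H. apply Rle_trans with (Rabs L); [apply Rle_abs | auto].
Qed.

Lemma lin3 (f1 f2 f3 : R -> R) l1 l2 l3 c1 c2 c3 :
  is_RInt_gen f1 (at_right 0) (Rbar_locally p_infty) l1 ->
  is_RInt_gen f2 (at_right 0) (Rbar_locally p_infty) l2 ->
  is_RInt_gen f3 (at_right 0) (Rbar_locally p_infty) l3 ->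
  is_RInt_gen (fun z => c1 * f1 z + c2 * f2 z + c3 * f3 z) (at_right 0) (Rbar_locally p_infty)
    (c1 * l1 + c2 * l2 + c3 * l3).
Proof.
  intros H1 H2 H3.
  apply (is_RInt_gen_scal _ c1) in H1. apply (is_RInt_gen_scal _ c2) in H2.
  apply (is_RInt_gen_scal _ c3) in H3.
  exact (is_RInt_gen_plus _ _ _ _ (is_RInt_gen_plus _ _ _ _ H1 H2) H3).
Qed.

Lemma F_rec a b s : 0 <= a -> 0 < b -> 1 <= s -> (0 < a \/ 0 < s - b) ->
  Fint a b s = (s - b) * Fint a b (s - 1) + Gint a b (s - 1).
Proof.
  intros Ha Hb Hs Hc.
  destruct (ex_F a b (s-1) Ha Hb ltac:(lra) ltac:(lra)) as [HF1 _].
  destruct (ex_G a b (s-1) Ha Hb ltac:(lra) ltac:(lra)) as [HG1 _].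
  destruct (ex_F a b s Ha Hb ltac:(lra) ltac:(lra)) as [HF _].
  assert (Hl := lin3 _ _ _ _ _ _ ((s-b)/2) (/2) (-/2) HF1 HG1 HF).
  assert (H0 : is_RInt_gen (fun z => (s-b)/2 * fI a b (s-1) z + /2 * gI a b (s-1) z + -/2 * fI a b s z)
                  (at_right 0) (Rbar_locally p_infty) 0).
  { apply (ibp0 (fI a b s)).
    - intros z Hz. unfold fI, gI, g0, Rpower. auto_derive; [repeat split; lra|].
      unfold Rdiv. rewrite !exp_sm1 by (apply Rmult_lt_0_compat; lra).
      set (E1 := exp (- b * ln (a + z))). set (E2 := exp (s * ln (z * / 2))).
      set (E3 := exp (- z * / 2)). field. lra.
    - intros z Hz. apply cont_of_der. unfold fI, gI, g0, Rpower. auto_derive. repeat split; lra.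
    - intros e He. destruct (fI_small a b s Ha Hb ltac:(lra)) as [A [HA HAb]].
      assert (Hr: 0 < (if Req_EM_T a 0 then s - b else s)) by (destruct (Req_EM_T a 0); [destruct Hc; lra | lra]).
      destruct (Rpower_small _ Hr (e / A) ltac:(unfold Rdiv; apply Rmult_lt_0_compat; [lra| apply Rinv_0_lt_compat; lra])) as [d [Hd Hdb]].
      exists d. split; auto. intros z Hz.
      rewrite Rabs_pos_eq by (left; apply fI_pos; lra).
      apply Rle_lt_trans with (A * Rpower z (if Req_EM_T a 0 then s - b else s)); [apply HAb; lra|].
      apply Hdb in Hz. apply (Rmult_lt_compat_l A) in Hz; auto.
      replace (A * (e / A)) with e in Hz by (field; lra). auto.
    - intros e He. destruct (fI_large a b s Ha Hb ltac:(lra)) as [B [HB HBb]].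
      destruct (exp_small B HB e He) as [M HM]. exists (Rmax M 1). intros z Hz.
      assert (HM0 := Rmax_l M 1). assert (HM1 := Rmax_r M 1).
      rewrite Rabs_pos_eq by (left; apply fI_pos; lra).
      apply Rle_lt_trans with (B * exp (- z / 4)); [apply HBb; lra| apply HM; lra]. }
  assert (U1 := @is_RInt_gen_unique R_CompleteNormedModule _ _ _ _ _ _ Hl).
  assert (U2 := @is_RInt_gen_unique R_CompleteNormedModule _ _ _ _ _ _ H0).
  simpl in U1, U2. rewrite U1 in U2. lra.
Qed.

Definition gam x t := Rpower t (x - 1) * exp (- t).

Lemma gam_large c : 0 <= c -> exists K, 0 < K /\ forall t, 0 < t -> Rpower t c * exp (- t) <= K * exp (- t / 4).
Proof.
  intros Hc. destruct (pow_bound c Hc) as [K [HK HKb]]. exists K. split; auto.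
  intros t Ht. apply Rle_trans with (K * exp (t/2) * exp (- t)).
  - apply Rmult_le_compat_r; [left; apply exp_pos| apply HKb; auto].
  - rewrite Rmult_assoc, <- exp_plus. apply Rmult_le_compat_l; [lra|]. apply exp_le_mono. lra.
Qed.

Lemma ex_Gamma x : 1 <= x ->
  is_RInt_gen (gam x) (at_right 0) (Rbar_locally p_infty) (Gamma x) /\ 0 < Gamma x.
Proof.
  intros Hx.
  destruct (gam_large (x-1) ltac:(lra)) as [K [HK HKb]].
  destruct (ex_int (gam x) 1 0 K) as [L [HL HLup]]; try lra.
  - intros z Hz. apply cont_of_der. unfold gam, Rpower. auto_derive. lra.
  - intros z Hz. unfold gam. left. apply Rmult_lt_0_compat; [apply Rpower_pos| apply exp_pos].
  - intros z Hz. unfold gam. rewrite Rpower_O by lra.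
    assert (Rpower z (x-1) <= 1) by (apply Rle_trans with (Rpower 1 (x-1)); [apply Rpower_le_base; lra | rewrite Rpower_1_base; lra]).
    assert (exp (- z) <= 1) by (apply Rle_trans with (exp 0); [apply exp_le_mono; lra| rewrite exp_0; lra]).
    assert (HP := Rpower_pos z (x-1)). assert (HP3 := exp_pos (-z)).
    apply Rle_trans with (1*1); [apply Rmult_le_compat; lra | lra].
  - intros z Hz. apply HKb. lra.
  - assert (Gamma x = L) by (apply is_RInt_gen_unique; auto).
    rewrite H. split; auto.
    apply Rlt_le_trans with (RInt (gam x) 1 2); [|apply HLup; lra].
    apply RInt_gt_0; [lra| intros; unfold gam; apply Rmult_lt_0_compat; [apply Rpower_pos| apply exp_pos]
      | intros z Hz; apply cont_of_der; unfold gam, Rpower; auto_derive; lra].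
Qed.

Lemma Gamma_rec x : 1 <= x -> Gamma (x + 1) = x * Gamma x.
Proof.
  intros Hx.
  destruct (ex_Gamma x Hx) as [H1 _]. destruct (ex_Gamma (x+1) ltac:(lra)) as [H2 _].
  assert (Hl := lin3 _ _ _ _ _ _ x (-1) 0 H1 H2 H1).
  assert (H0 : is_RInt_gen (fun t => x * gam x t + -1 * gam (x+1) t + 0 * gam x t)
                  (at_right 0) (Rbar_locally p_infty) 0).
  { apply (ibp0 (fun t => Rpower t x * exp (- t))).
    - intros z Hz. unfold gam, Rpower. auto_derive; [lra|].
      replace (x + 1 - 1) with x by ring. rewrite exp_sm1 by lra.
      set (E1 := exp (x * ln z)). set (E3 := exp (- z)). field. lra.
    - intros z Hz. apply cont_of_der. unfold gam, Rpower. auto_derive. repeat split; lra.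
    - intros e He.
      destruct (Rpower_small x ltac:(lra) e He) as [d [Hd Hdb]].
      exists d. split; auto. intros z Hz.
      assert (HP := Rpower_pos z x). assert (HP3 := exp_pos (-z)).
      assert (exp (- z) <= 1) by (apply Rle_trans with (exp 0); [apply exp_le_mono; lra| rewrite exp_0; lra]).
      rewrite Rabs_pos_eq by (apply Rmult_le_pos; lra).
      apply Rle_lt_trans with (Rpower z x * 1); [apply Rmult_le_compat_l; lra|].
      rewrite Rmult_1_r. apply Hdb; auto.
    - intros e He. destruct (gam_large x ltac:(lra)) as [K [HK HKb]].
      destruct (exp_small K HK e He) as [M HM]. exists (Rmax M 1). intros z Hz.
      assert (HM0 := Rmax_l M 1). assert (HM1 := Rmax_r M 1).
      assert (HP := Rpower_pos z x). assert (HP3 := exp_pos (-z)).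
      rewrite Rabs_pos_eq by (apply Rmult_le_pos; lra).
      apply Rle_lt_trans with (K * exp (- z / 4)); [apply HKb; lra| apply HM; lra]. }
  assert (U1 := @is_RInt_gen_unique R_CompleteNormedModule _ _ _ _ _ _ Hl).
  assert (U2 := @is_RInt_gen_unique R_CompleteNormedModule _ _ _ _ _ _ H0).
  simpl in U1, U2. rewrite U1 in U2. lra.
Qed.

Lemma int_div (f : R -> R) L c :
  is_RInt_gen f (at_right 0) (Rbar_locally p_infty) L -> int0inf (fun z => f z / c) = L / c.
Proof.
  intros H. apply (is_RInt_gen_scal _ (/ c)) in H.
  replace (L / c) with (scal (/c) L) by (change (/c * L = L / c); unfold Rdiv; ring).
  apply is_RInt_gen_unique.
  apply (is_RInt_gen_ext (fun y => scal (/ c) (f y))); [|exact H].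
  apply (Filter_prod _ _ _ (fun _ => True) (fun _ => True)).
  - exists (mkposreal 1 Rlt_0_1). auto.
  - exists 0. auto.
  - intros. change (/ c * f x0 = f x0 / c). unfold Rdiv. ring.
Qed.

Lemma Gint_zero b s : Gint 0 b s = 0.
Proof.
  unfold Gint, int0inf. apply is_RInt_gen_unique.
  unfold is_RInt_gen, filterlimi, filter_le, filtermapi. intros P [eps HP].
  apply (Filter_prod _ _ _ (fun _ => True) (fun _ => True)).
  - exists (mkposreal 1 Rlt_0_1). auto.
  - exists 0. auto.
  - intros x y _ _. exists 0. split.
    + apply (is_RInt_ext (fun _ => 0)).
      * intros z _. unfold gI, Rdiv. rewrite !Rmult_0_l. reflexivity.
      * simpl. assert (Hc := @is_RInt_const R_NormedModule x y 0).
        change (is_RInt (fun _ : R => 0) x y ((y - x) * 0)) in Hc. rewrite Rmult_0_r in Hc. exact Hc.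
    + apply HP. apply ball_center.
Qed.

Lemma w_val a b p j n :
  let s := INR n + INR p / 2 + INR j - 1 in
  is_RInt_gen (fI a b s) (at_right 0) (Rbar_locally p_infty) (Fint a b s) ->
  w a b p j n = Fint a b s / (2 * Gamma (INR n + INR p / 2)).
Proof. intros s H. unfold w. apply (int_div (fI a b s)). exact H. Qed.

Lemma phi_val a b p m :
  phi a b p m = Gint a b (INR m + INR p / 2 - 1) / Fint a b (INR m + INR p / 2 - 1).
Proof. reflexivity. Qed.

Lemma w_val' a b p j n s : INR n + INR p / 2 + INR j - 1 = s ->
  is_RInt_gen (fI a b s) (at_right 0) (Rbar_locally p_infty) (Fint a b s) ->
  w a b p j n = Fint a b s / (2 * Gamma (INR n + INR p / 2)).
Proof. intros <- H. unfold w. apply (int_div (fI a b _)). exact H. Qed.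

Lemma phi_val' a b p m t : INR m + INR p / 2 - 1 = t ->
  phi a b p m = Gint a b t / Fint a b t.
Proof. intros <-. reflexivity. Qed.

Lemma key a b p k n : (3 <= p)%nat -> 0 <= a -> 0 < b ->
  ((0 < a /\ INR p / 2 - 1 <= b <= INR p / 2) \/ (a = 0 /\ INR p / 2 - 1 <= b < INR p / 2)) ->
  (1 <= k <= 3)%nat ->
  0 < w a b p (k-1) n /\ (0 <= phi a b p (n+k-1) <= b) /\
  w a b p k n = (INR n + (INR p / 2 + INR k - 1 - b)) * w a b p (k-1) n
                + phi a b p (n+k-1) * w a b p (k-1) n /\
  w a b p (k-1) (S n) * (INR n + INR p / 2) = w a b p k n /\
  (a = 0 -> phi a b p (n+k-1) = 0).
Proof.
  intros Hp Ha Hb Hc Hk.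
  assert (HP: 3 <= INR p) by (replace 3 with (INR 3) by (simpl; ring); apply le_INR; lia).
  assert (Hk1: 1 <= INR k) by (replace 1 with (INR 1) by (simpl; ring); apply le_INR; lia).
  assert (Hk3: INR k <= 3) by (replace 3 with (INR 3) by (simpl; ring); apply le_INR; lia).
  assert (Hn: 0 <= INR n) by apply pos_INR.
  assert (HINRk1 : INR (k-1) = INR k - 1) by (rewrite minus_INR by lia; simpl; ring).
  assert (HINRm : INR (n+k-1) = INR n + INR k - 1) by (rewrite minus_INR by lia; rewrite plus_INR; simpl; ring).
  assert (HbP: b <= INR p / 2) by (destruct Hc as [[_ ?]|[_ ?]]; lra).
  set (s := INR n + INR p / 2 + INR k - 1).
  assert (Hcond1: 0 < a \/ -1 < (s-1) - b)
    by (destruct Hc as [[? ?]|[? ?]]; [left; lra| right; unfold s; lra]).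
  assert (Hcond0: 0 < a \/ 0 < s - b)
    by (destruct Hc as [[? ?]|[? ?]]; [left; lra| right; unfold s; lra]).
  assert (Hcond2: 0 < a \/ -1 < s - b) by (destruct Hcond0; [left|right]; lra).
  destruct (ex_F a b (s-1) Ha Hb ltac:(unfold s; lra) Hcond1) as [HF1 HF1p].
  destruct (ex_G a b (s-1) Ha Hb ltac:(unfold s; lra) Hcond1) as [HG1 [HG1a HG1b]].
  assert (Hrec := F_rec a b s Ha Hb ltac:(unfold s; lra) Hcond0).
  destruct (ex_F a b s Ha Hb ltac:(unfold s; lra) Hcond2) as [HF HFp].
  destruct (ex_Gamma (INR n + INR p/2) ltac:(lra)) as [_ HGam].
  assert (HGrec := Gamma_rec (INR n + INR p/2) ltac:(lra)).
  assert (Hv: w a b p (k-1) n = Fint a b (s-1) / (2 * Gamma (INR n + INR p/2))).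
  { apply w_val'; auto. rewrite HINRk1; unfold s; ring. }
  assert (Hw: w a b p k n = Fint a b s / (2 * Gamma (INR n + INR p/2))).
  { apply w_val'; auto. }
  assert (HvS: w a b p (k-1) (S n) = Fint a b s / (2 * Gamma (INR n + INR p/2 + 1))).
  { replace (INR n + INR p/2 + 1) with (INR (S n) + INR p / 2) by (rewrite S_INR; ring).
    apply w_val'; auto. rewrite HINRk1, S_INR; unfold s; ring. }
  assert (Hph: phi a b p (n+k-1) = Gint a b (s-1) / Fint a b (s-1)).
  { apply phi_val'. rewrite HINRm. unfold s; ring. }
  assert (HG0: a = 0 -> Gint a b (s-1) = 0) by (intros ->; apply Gint_zero).
  set (F1 := Fint a b (s-1)) in *. set (G1 := Gint a b (s-1)) in *.
  set (Gm := Gamma (INR n + INR p / 2)) in *.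
  repeat split.
  - rewrite Hv. unfold Rdiv. apply Rmult_lt_0_compat; [lra | apply Rinv_0_lt_compat; lra].
  - rewrite Hph. unfold Rdiv. apply Rmult_le_pos; [lra | left; apply Rinv_0_lt_compat; lra].
  - rewrite Hph. replace b with (b * F1 / F1) by (field; lra).
    unfold Rdiv. apply Rmult_le_compat_r; [left; apply Rinv_0_lt_compat; lra | lra].
  - rewrite Hw, Hv, Hph, Hrec. unfold s. field. split; lra.
  - rewrite HvS, Hw, HGrec. field. split; lra.
  - intros Ha0. rewrite Hph, (HG0 Ha0). unfold Rdiv. ring.
Qed.

Definition cP y n := exp (- (y / 2)) * (y / 2) ^ n / INR (fact n).

Lemma EP_eq y f : EPois y f = Series (fun n => cP y n * f n).
Proof. reflexivity. Qed.

Lemma cP_pos y n : 0 < y -> 0 < cP y n.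
Proof.
  intros Hy. unfold cP, Rdiv. apply Rmult_lt_0_compat; [apply Rmult_lt_0_compat|].
  - apply exp_pos.
  - apply pow_lt; lra.
  - apply Rinv_0_lt_compat, INR_fact_lt_0.
Qed.

Lemma cP_S y n : cP y (S n) * INR (S n) = y / 2 * cP y n.
Proof.
  unfold cP. rewrite fact_simpl, mult_INR. simpl pow.
  assert (H1 := INR_fact_neq_0 n). assert (H2 : INR (S n) <> 0) by (rewrite S_INR; generalize (pos_INR n); lra).
  field. split; auto.
Qed.

Lemma exR_plus (a b : nat -> R) : ex_series a -> ex_series b -> ex_series (fun n => a n + b n).
Proof. exact (@ex_series_plus R_AbsRing R_NormedModule a b). Qed.

Lemma exR_scal c (a : nat -> R) : ex_series a -> ex_series (fun n => c * a n).
Proof. exact (@ex_series_scal_l R_AbsRing R_NormedModule c a). Qed.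

Lemma exR_ext (a b : nat -> R) : (forall n, a n = b n) -> ex_series a -> ex_series b.
Proof. exact (@ex_series_ext R_AbsRing R_NormedModule a b). Qed.

Lemma ex_c6 y K : 0 < y -> ex_series (fun n => cP y n * (K * 6 ^ n)).
Proof.
  intros Hy.
  assert (H : ex_series (fun i => / INR (fact i) * (3 * y) ^ i)).
  { exists (exp (3 * y)). apply is_series_Reals. unfold exp. destruct (exist_exp (3 * y)) as [l Hl]. exact Hl. }
  apply (exR_scal (K * exp (- (y / 2)))) in H.
  revert H. apply exR_ext. intros n. unfold cP.
  replace ((3 * y) ^ n) with ((y / 2) ^ n * 6 ^ n) by (rewrite <- Rpow_mult_distr; f_equal; field).
  assert (H1 := INR_fact_neq_0 n). field. auto.
Qed.

Lemma ex_dom y (f : nat -> R) K : 0 < y -> (forall n, 0 <= f n <= K * 6 ^ n) ->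
  ex_series (fun n => cP y n * f n).
Proof.
  intros Hy Hf. apply (@ex_series_le R_AbsRing R_CompleteNormedModule _ (fun n => cP y n * (K * 6 ^ n))).
  - intros n. change (Rabs (cP y n * f n) <= cP y n * (K * 6 ^ n)).
    assert (Hc := cP_pos y n Hy). destruct (Hf n).
    rewrite Rabs_pos_eq by (apply Rmult_le_pos; lra).
    apply Rmult_le_compat_l; lra.
  - apply ex_c6; auto.
Qed.

Lemma INR_le_pow2 n : INR n <= 2 ^ n.
Proof.
  induction n.
  - simpl. lra.
  - rewrite S_INR. simpl. assert (1 <= 2 ^ n) by (apply pow_R1_Rle; lra). lra.
Qed.

Lemma Series_zero : Series (fun _ => 0) = 0.
Proof.
  rewrite (Series_ext _ (fun n => 0 * 0)) by (intros; ring).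
  rewrite Series_scal_l. ring.
Qed.

Lemma Series_pos (a : nat -> R) : ex_series a -> (forall n, 0 <= a n) -> 0 < a 0%nat -> 0 < Series a.
Proof.
  intros He Hp H0. rewrite Series_incr_1 by auto.
  assert (0 <= Series (fun k => a (S k))).
  { rewrite <- Series_zero. apply Series_le; [intros; split; [lra| apply Hp]|].
    apply (ex_series_incr_1 a). auto. }
  lra.
Qed.

Theorem propositionA4 (p : nat) (a b y : R) (k : nat) :
  (3 <= p)%nat -> 0 <= a -> 0 < b ->
  ((0 < a /\ INR p / 2 - 1 <= b <= INR p / 2) \/
   (a = 0 /\ INR p / 2 - 1 <= b < INR p / 2)) ->
  0 < y -> (1 <= k <= 3)%nat ->
  let E := EPois y in
  let wk := w a b p k in
  let wk1 := w a b p (k - 1) in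
  (a = 0 ->
     E wk / E wk1 =
     INR p / 2 + INR k - b - 1 + y / 2
     + y * (INR k - b - 1) / 2 * (E (fun n => wk1 n / (INR n + INR p / 2)) / E wk1)) /\
  (0 < a ->
     E wk / E wk1 =
     INR p / 2 + INR k - b - 1 + y / 2
     + y * (INR k - b - 1) / 2 * (E (fun n => wk1 n / (INR n + INR p / 2)) / E wk1)
     + y / 2 * (E (fun n => phi a b p (n + k - 1) * wk1 n / (INR n + INR p / 2)) / E wk1)
     + E (fun n => phi a b p (n + k - 1) * wk1 n) / E wk1).
Proof.
  intros Hp Ha Hb Hc Hy Hk. cbv zeta.
  assert (HK := fun n => key a b p k n Hp Ha Hb Hc Hk).
  assert (HP: 3 <= INR p) by (replace 3 with (INR 3) by (simpl; ring); apply le_INR; lia).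
  assert (Hk1: 1 <= INR k) by (replace 1 with (INR 1) by (simpl; ring); apply le_INR; lia).
  assert (Hk3: INR k <= 3) by (replace 3 with (INR 3) by (simpl; ring); apply le_INR; lia).
  rewrite !EP_eq. cbv beta.
  set (v := w a b p (k - 1)) in *.
  set (wk := w a b p k) in *.
  set (ph := fun n => phi a b p (n + k - 1)) in *.
  change (fun n => cP y n * (phi a b p (n + k - 1) * v n / (INR n + INR p / 2)))
    with (fun n => cP y n * (ph n * v n / (INR n + INR p / 2))).
  change (fun n => cP y n * (phi a b p (n + k - 1) * v n))
    with (fun n => cP y n * (ph n * v n)).
  assert (Hv3 : forall n, v (S n) <= 3 * v n).
  { intros n. destruct (HK n) as [Hvp [[Hph0 Hph1] [Heq [HS _]]]]. fold v wk in Hvp, Heq, HS.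
    assert (Hn := pos_INR n).
    apply (Rmult_le_reg_r (INR n + INR p / 2)); [lra|]. rewrite HS, Heq.
    change (phi a b p (n + k - 1)) with (ph n) in *.
    assert (ph n * v n <= b * v n) by (apply Rmult_le_compat_r; lra).
    assert (INR n * v n >= 0) by (apply Rle_ge, Rmult_le_pos; lra).
    nra. }
  assert (Hvb : forall n, v n <= v 0%nat * 6 ^ n).
  { induction n.
    - simpl. lra.
    - apply Rle_trans with (3 * v n); [apply Hv3|].
      assert (v 0%nat * 6 ^ n * 3 <= v 0%nat * 6 ^ S n).
      { simpl. destruct (HK 0%nat) as [Hv0 _]. assert (0 <= 6 ^ n) by (apply pow_le; lra). nra. }
      lra. }
  destruct (HK 0%nat) as [Hv0 _]. fold v in Hv0.
  set (K := v 0%nat * (1 + b)).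
  assert (HK6 : forall n, v 0%nat * 6 ^ n <= K * 6 ^ n /\ b * (v 0%nat * 6 ^ n) <= K * 6 ^ n).
  { intros n. assert (0 < 6 ^ n) by (apply pow_lt; lra). unfold K.
    assert (0 <= v 0%nat * b * 6 ^ n) by (repeat apply Rmult_le_pos; lra).
    assert (0 <= v 0%nat * 6 ^ n) by (repeat apply Rmult_le_pos; lra).
    replace (v 0%nat * (1 + b) * 6 ^ n) with (v 0%nat * 6 ^ n + v 0%nat * b * 6 ^ n) by ring.
    split; [lra|]. replace (b * (v 0%nat * 6 ^ n)) with (v 0%nat * b * 6 ^ n) by ring. lra. }
  assert (Hpt : forall n, 0 < v n /\ 0 <= ph n <= b /\ 1 <= INR n + INR p / 2).
  { intros n. destruct (HK n) as [Hvp [Hph _]]. assert (Hn := pos_INR n). unfold ph. repeat split; try lra. }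
  assert (Sv : ex_series (fun n => cP y n * v n)).
  { apply (ex_dom y _ K Hy). intros n. destruct (Hpt n) as [? _]. split; [lra|].
    destruct (HK6 n). specialize (Hvb n). lra. }
  assert (Sq : ex_series (fun n => cP y n * (v n / (INR n + INR p / 2)))).
  { apply (ex_dom y _ K Hy). intros n. destruct (Hpt n) as [? [? ?]].
    destruct (HK6 n). specialize (Hvb n).
    assert (v n / (INR n + INR p / 2) <= v n).
    { unfold Rdiv. rewrite <- (Rmult_1_r (v n)) at 2. apply Rmult_le_compat_l; [lra|].
      rewrite <- Rinv_1. apply Rinv_le_contravar; lra. }
    split; [unfold Rdiv; apply Rmult_le_pos; [lra| left; apply Rinv_0_lt_compat; lra]| lra]. }
  assert (Sr : ex_series (fun n => cP y n * (ph n * v n))).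
  { apply (ex_dom y _ K Hy). intros n. destruct (Hpt n) as [? [? ?]].
    destruct (HK6 n). specialize (Hvb n).
    assert (ph n * v n <= b * v n) by (apply Rmult_le_compat_r; lra).
    assert (b * v n <= b * (v 0%nat * 6 ^ n)) by (apply Rmult_le_compat_l; lra).
    split; [apply Rmult_le_pos; lra| lra]. }
  assert (St : ex_series (fun n => cP y n * (ph n * v n / (INR n + INR p / 2)))).
  { apply (ex_dom y _ K Hy). intros n. destruct (Hpt n) as [? [? ?]].
    destruct (HK6 n). specialize (Hvb n).
    assert (ph n * v n <= b * v n) by (apply Rmult_le_compat_r; lra).
    assert (b * v n <= b * (v 0%nat * 6 ^ n)) by (apply Rmult_le_compat_l; lra).
    assert (0 <= ph n * v n) by (apply Rmult_le_pos; lra).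
    assert (ph n * v n / (INR n + INR p / 2) <= ph n * v n).
    { unfold Rdiv. rewrite <- (Rmult_1_r (ph n * v n)) at 2. apply Rmult_le_compat_l; [lra|].
      rewrite <- Rinv_1. apply Rinv_le_contravar; lra. }
    split; [unfold Rdiv; apply Rmult_le_pos; [lra| left; apply Rinv_0_lt_compat; lra]| lra]. }
  assert (Sm : ex_series (fun n => cP y n * (INR n * v n))).
  { apply (ex_dom y _ (v 0%nat) Hy). intros n. destruct (Hpt n) as [? _].
    specialize (Hvb n). assert (Hn := pos_INR n). assert (H2 := INR_le_pow2 n).
    split; [apply Rmult_le_pos; lra|].
    replace (6 ^ n) with (2 ^ n * 3 ^ n) by (rewrite <- Rpow_mult_distr; f_equal; ring).
    assert (v n <= v 0%nat * 3 ^ n).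
    { clear -Hv3 Hpt. induction n; [simpl; lra|].
      apply Rle_trans with (3 * v n); [apply Hv3|]. simpl. lra. }
    assert (0 <= 3 ^ n) by (apply pow_le; lra).
    apply Rle_trans with (2 ^ n * v n); [apply Rmult_le_compat_r; lra|].
    replace (v 0%nat * (2 ^ n * 3 ^ n)) with (2 ^ n * (v 0%nat * 3 ^ n)) by ring.
    apply Rmult_le_compat_l; [apply pow_le; lra| lra]. }
  set (Ev := Series (fun n => cP y n * v n)).
  set (Eq := Series (fun n => cP y n * (v n / (INR n + INR p / 2)))).
  set (Er := Series (fun n => cP y n * (ph n * v n))).
  set (Et := Series (fun n => cP y n * (ph n * v n / (INR n + INR p / 2)))).
  assert (HEv : 0 < Ev).
  { apply Series_pos; auto.
    - intros n. destruct (Hpt n). apply Rmult_le_pos; [left; apply cP_pos; auto| lra].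
    - apply Rmult_lt_0_compat; [apply cP_pos; auto| lra]. }
  assert (HS1 : Series (fun n => cP y n * v (S n)) = Ev + ((INR k - 1 - b) * Eq + Et)).
  { rewrite (Series_ext _ (fun n => cP y n * v n + ((INR k - 1 - b) * (cP y n * (v n / (INR n + INR p / 2)))
                                    + cP y n * (ph n * v n / (INR n + INR p / 2))))).
    - rewrite Series_plus, Series_plus, Series_scal_l; auto.
      apply exR_scal; auto. apply exR_plus; auto. apply exR_scal; auto.
    - intros n. destruct (HK n) as [_ [_ [Heq [HS _]]]]. fold v wk in Heq, HS.
      change (phi a b p (n + k - 1)) with (ph n) in *.
      assert (Hn := pos_INR n).
      replace (v (S n)) with (wk n / (INR n + INR p / 2)) by (rewrite <- HS; field; lra).
      rewrite Heq. field. lra. }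
  assert (HSm : Series (fun n => cP y n * (INR n * v n)) = y / 2 * (Ev + ((INR k - 1 - b) * Eq + Et))).
  { rewrite Series_incr_1_aux by (simpl; ring).
    rewrite <- HS1, <- Series_scal_l. apply Series_ext. intros n.
    transitivity (cP y (S n) * INR (S n) * v (S n)); [ring|]. rewrite cP_S. ring. }
  assert (Hmain : Series (fun n => cP y n * wk n) =
                  y / 2 * (Ev + ((INR k - 1 - b) * Eq + Et)) + ((INR p / 2 + INR k - 1 - b) * Ev + Er)).
  { rewrite (Series_ext _ (fun n => cP y n * (INR n * v n) + ((INR p / 2 + INR k - 1 - b) * (cP y n * v n)
                                    + cP y n * (ph n * v n)))).
    - rewrite Series_plus, Series_plus, Series_scal_l; auto.
      + rewrite HSm. reflexivity.
      + apply exR_scal; auto.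
      + apply exR_plus; auto. apply exR_scal; auto.
    - intros n. destruct (HK n) as [_ [_ [Heq _]]]. fold v wk in Heq.
      change (phi a b p (n + k - 1)) with (ph n) in *.
      rewrite Heq. ring. }
  split.
  - intros Ha0.
    assert (Hph0 : forall n, ph n = 0) by (intros n; destruct (HK n) as [_ [_ [_ [_ H0]]]]; auto).
    assert (HEr : Er = 0).
    { unfold Er. rewrite (Series_ext _ (fun n => 0 * (cP y n * v n))) by (intros n; rewrite Hph0; ring).
      rewrite Series_scal_l. ring. }
    assert (HEt : Et = 0).
    { unfold Et. rewrite (Series_ext _ (fun n => 0 * (cP y n * v n))) by (intros n; rewrite Hph0; unfold Rdiv; ring).
      rewrite Series_scal_l. ring. }
    rewrite Hmain, HEr, HEt. field. lra.
  - intros Hap. rewrite Hmain. field. lra.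
Qed.
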